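(* Let $0<\beta<\delta$, $N_0$ a non-negative integer, and set $\hat s=s/(\delta-\beta)$. Let $g(z,t)=\left[\frac{\delta-\beta z-(1-z)\delta e^{(\beta-\delta)t}}{\delta-\beta z-(1-z)\beta e^{(\beta-\delta)t}}\right]^{N_0}$. Then for $0\le z<1$ and $\operatorname{Re}s>0$, $$\int_0^\infty g(z,t)e^{-st}\,dt=\left(\frac{\delta-\beta z}{1-z}\right)^{\hat s}\int_z^1 (1-u)^{\hat s-1}(\delta-\beta u)^{-\hat s-1}u^{N_0}\,du,$$ and this function $G(z,s)$ satisfies the ODE $(1-z)(\delta-\beta z)\,\partial_z G(z,s)=sG(z,s)-z^{N_0}$.
   Context: Powers of positive real numbers are taken with the principal branch. *)

(* Defs.v *)
From Stdlib Require Import Reals.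
Open Scope R_scope.

Definition Cplx : Type := (R * R)%type.
Definition Cre (w : Cplx) : R := fst w.
Definition Cim (w : Cplx) : R := snd w.
Definition RtoC (x : R) : Cplx := (x, 0).
Definition Cadd (w v : Cplx) : Cplx := (fst w + fst v, snd w + snd v).
Definition Copp (w : Cplx) : Cplx := (- fst w, - snd w).
Definition Csub (w v : Cplx) : Cplx := Cadd w (Copp v).
Definition Cmul (w v : Cplx) : Cplx :=
  (fst w * fst v - snd w * snd v, fst w * snd v + snd w * fst v).
Definition Cscal (x : R) (w : Cplx) : Cplx := (x * fst w, x * snd w).

Definition Cexp (w : Cplx) : Cplx :=
  (exp (fst w) * cos (snd w), exp (fst w) * sin (snd w)).

Definition Cpow (x : R) (w : Cplx) : Cplx := Cexp (Cscal (ln x) w).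

Definition improper_int_inf (f : R -> R) (a l : R) : Prop :=
  (forall T, a <= T -> inhabited (Riemann_integrable f a T)) /\
  (forall eps, 0 < eps -> exists M, forall T (pr : Riemann_integrable f a T),
      a <= T -> M <= T -> Rabs (RiemannInt pr - l) < eps).

(* Improper Riemann integral  \int_a^b f = l, improper at the right end b
   (agrees with the proper integral when f is integrable on [a,b]) *)
Definition improper_int_right (f : R -> R) (a b l : R) : Prop :=
  (forall c, a <= c < b -> inhabited (Riemann_integrable f a c)) /\
  (forall eps, 0 < eps -> exists d, 0 < d /\ forall c (pr : Riemann_integrable f a c),
      a <= c < b -> b - c < d -> Rabs (RiemannInt pr - l) < eps).

Definition Cimproper_int_inf (f : R -> Cplx) (a : R) (l : Cplx) : Prop :=
  improper_int_inf (fun t => fst (f t)) a (fst l) /\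
  improper_int_inf (fun t => snd (f t)) a (snd l).

Definition Cimproper_int_right (f : R -> Cplx) (a b : R) (l : Cplx) : Prop :=
  improper_int_right (fun t => fst (f t)) a b (fst l) /\
  improper_int_right (fun t => snd (f t)) a b (snd l).

Definition C_deriv_within (F : R -> Cplx) (D : R -> Prop) (z : R) (l : Cplx) : Prop :=
  limit1_in (fun h => (fst (F h) - fst (F z)) / (h - z))
            (fun h => D h /\ h <> z) (fst l) z /\
  limit1_in (fun h => (snd (F h) - snd (F z)) / (h - z))
            (fun h => D h /\ h <> z) (snd l) z.

Definition gfun (beta delta : R) (N0 : nat) (z t : R) : R :=
  ((delta - beta * z - (1 - z) * delta * exp ((beta - delta) * t)) /
   (delta - beta * z - (1 - z) * beta * exp ((beta - delta) * t))) ^ N0.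

Definition laplace_integrand (beta delta : R) (N0 : nat) (z : R) (s : Cplx) (t : R) : Cplx :=
  Cscal (gfun beta delta N0 z t) (Cexp (Copp (Cscal t s))).

Definition rhs_integrand (beta delta : R) (N0 : nat) (s : Cplx) (u : R) : Cplx :=
  let sh := Cscal (/ (delta - beta)) s in
  Cscal (u ^ N0)
    (Cmul (Cpow (1 - u) (Csub sh (RtoC 1)))
          (Cpow (delta - beta * u) (Csub (Copp sh) (RtoC 1)))).

Definition rhs_prefactor (beta delta : R) (z : R) (s : Cplx) : Cplx :=
  Cpow ((delta - beta * z) / (1 - z)) (Cscal (/ (delta - beta)) s).

(* Main.v *)
From Coquelicot Require Import Coquelicot.
From Stdlib Require Import Reals Lra.
Require Import Defs.
Open Scope R_scope.

Lemma Cexp_add w v : Cmul (Cexp w) (Cexp v) = Cexp (Cadd w v).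
Proof.
  destruct w as [w1 w2], v as [v1 v2]; unfold Cmul, Cexp, Cadd; simpl.
  rewrite exp_plus, cos_plus, sin_plus; f_equal; ring.
Qed.

Lemma Cscal_Cexp x w : 0 < x -> Cscal x (Cexp w) = Cexp (Cadd w (RtoC (ln x))).
Proof.
  intros Hx; destruct w as [w1 w2]; unfold Cscal, Cexp, Cadd, RtoC; simpl.
  rewrite Rplus_0_r, exp_plus, exp_ln by lra; f_equal; ring.
Qed.

Lemma key_pow (x y w : R) (sh : Cplx) : 0 < x -> 0 < y -> 0 < w ->
  Cscal (y * w) (Cmul (Cpow x sh) (Cmul (Cpow y (Csub sh (RtoC 1)))
        (Cpow w (Csub (Copp sh) (RtoC 1))))) = Cpow (x * y / w) sh.
Proof.
  intros Hx Hy Hw. unfold Cpow. rewrite !Cexp_add, Cscal_Cexp by nra.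
  f_equal. destruct sh as [a b]; unfold Cadd, Cscal, Csub, Copp, RtoC; simpl.
  rewrite ln_mult, ln_div, ln_mult by (try apply Rdiv_lt_0_compat; nra).
  f_equal; ring.
Qed.

Lemma Cpow_1 sh : Cpow 1 sh = RtoC 1.
Proof. unfold Cpow, Cexp, Cscal, RtoC; rewrite ln_1; simpl.
  rewrite !Rmult_0_l, exp_0, cos_0, sin_0; f_equal; ring. Qed.

Lemma Cpow_exp t sh : Cpow (exp t) sh = Cexp (Cscal t sh).
Proof. unfold Cpow; rewrite ln_exp; reflexivity. Qed.

Lemma f1_cont beta delta N0 s u : 0 < beta -> beta < delta -> u < 1 ->
  continuous (fun u => fst (rhs_integrand beta delta N0 s u)) u.
Proof.
  intros hb hbd hu. apply (@ex_derive_continuous R_AbsRing R_NormedModule).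
  unfold rhs_integrand, Cpow, Cexp, Cscal, Cmul, Csub, Cadd, Copp, RtoC; simpl.
  auto_derive; repeat split; nra.
Qed.
Lemma f2_cont beta delta N0 s u : 0 < beta -> beta < delta -> u < 1 ->
  continuous (fun u => snd (rhs_integrand beta delta N0 s u)) u.
Proof.
  intros hb hbd hu. apply (@ex_derive_continuous R_AbsRing R_NormedModule).
  unfold rhs_integrand, Cpow, Cexp, Cscal, Cmul, Csub, Cadd, Copp, RtoC; simpl.
  auto_derive; repeat split; nra.
Qed.

Lemma exp_am1 a x : 0 < x -> exp ((a-1)*ln x) = exp (a*ln x) / x.
Proof.
  intros Hx. replace ((a-1)*ln x) with (a*ln x + - ln x) by ring.
  rewrite exp_plus, exp_Ropp, exp_ln by lra. reflexivity.
Qed.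

Lemma bnd_int (K a c c' : R) : 0 < a -> c <= c' -> c' < 1 ->
  is_RInt (fun u => K*exp((a-1)*ln(1-u))) c c'
    ((K/a)*(exp(a*ln(1-c)) - exp(a*ln(1-c')))).
Proof.
  intros Ha Hc Hc'.
  set (F := fun u => -(K/a)*exp(a*ln(1-u))).
  replace ((K/a)*(exp(a*ln(1-c)) - exp(a*ln(1-c')))) with (minus (F c') (F c))
    by (unfold F, minus, plus, opp; simpl; ring).
  apply (@is_RInt_derive R_CompleteNormedModule).
  - intros x Hx. rewrite Rmin_left, Rmax_right in Hx by lra.
    unfold F. auto_derive. lra. replace (1 + - x) with (1 - x) by ring.
    rewrite exp_am1 by lra. field. split; lra.
  - intros x Hx. rewrite Rmin_left, Rmax_right in Hx by lra.
    apply (@ex_derive_continuous R_AbsRing R_NormedModule).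
    auto_derive. lra.
Qed.

Lemma tail_bound (fj : R -> R) (K a : R) : 0 < a -> 0 <= K ->
  (forall u, u < 1 -> continuous fj u) ->
  (forall u, 0 <= u < 1 -> Rabs (fj u) <= K*exp((a-1)*ln(1-u))) ->
  forall c c', 0 <= c -> c <= c' -> c' < 1 ->
  Rabs (RInt fj c c') <= (K/a)*exp(a*ln(1-c)).
Proof.
  intros Ha HK Hcont Hb c c' H0 H1 H2.
  assert (Hex : ex_RInt fj c c').
  { apply (@ex_RInt_continuous R_CompleteNormedModule). intros x Hx. rewrite Rmin_left, Rmax_right in Hx by lra.
    apply Hcont; lra. }
  eapply Rle_trans. apply abs_RInt_le; auto.
  eapply Rle_trans. apply RInt_le with (g := fun u => K*exp((a-1)*ln(1-u))); auto.
  - apply (@ex_RInt_continuous R_CompleteNormedModule). intros x Hx. rewrite Rmin_left, Rmax_right in Hx by lra.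
    apply continuous_Rabs_comp, Hcont; lra.
  - apply (@ex_RInt_continuous R_CompleteNormedModule). intros x Hx. rewrite Rmin_left, Rmax_right in Hx by lra.
    apply (@ex_derive_continuous R_AbsRing R_NormedModule).
    auto_derive; lra.
  - intros x Hx. apply Hb. lra.
  - rewrite (is_RInt_unique _ _ _ _ (bnd_int K a c c' Ha H1 H2)).
    assert (0 < exp (a*ln(1-c'))) by apply exp_pos.
    assert (0 <= K/a) by (apply Rdiv_le_0_compat; lra).
    assert (0 <= K/a * exp (a*ln(1-c'))) by (apply Rmult_le_pos; lra).
    lra.
Qed.

Lemma smallB (K a eps : R) : 0 < a -> 0 <= K -> 0 < eps ->
  exists d, 0 < d <= 1 /\ forall c, c < 1 -> 1 - c < d -> (K/a)*exp(a*ln(1-c)) < eps.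
Proof.
  intros Ha HK He.
  assert (Hq : 0 < eps*a/(K+1)) by (apply Rdiv_lt_0_compat; nra).
  exists (Rmin 1 (exp (ln (eps*a/(K+1))/a))). split.
  { split. apply Rmin_glb_lt; [lra| apply exp_pos]. apply Rmin_l. }
  intros c Hc Hd.
  assert (Hd2 : 1 - c < exp (ln (eps*a/(K+1))/a)) by (eapply Rlt_le_trans; [exact Hd| apply Rmin_r]).
  apply ln_increasing in Hd2; [|lra]. rewrite ln_exp in Hd2.
  assert (Hl : a * ln (1-c) < ln (eps*a/(K+1))).
  { apply (Rmult_lt_compat_l a) in Hd2; [|lra]. replace (a * (ln (eps * a / (K + 1)) / a)) with (ln (eps * a / (K + 1))) in Hd2 by (field; lra). lra. }
  apply exp_increasing in Hl. rewrite exp_ln in Hl by lra.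
  assert (HKa : 0 <= K/a) by (apply Rdiv_le_0_compat; lra).
  apply Rle_lt_trans with (K/a * (eps*a/(K+1))).
  { apply Rmult_le_compat_l; lra. }
  replace (K / a * (eps * a / (K + 1))) with (eps * (K/(K+1))) by (field; lra).
  assert (K/(K+1) < 1). { apply (Rmult_lt_reg_r (K+1)); [lra|]. field_simplify; lra. }
  nra.
Qed.

Lemma chasles0 (fj : R -> R) u v : (forall x, x < 1 -> continuous fj x) -> 0 <= u -> u <= v -> v < 1 ->
  RInt fj 0 v - RInt fj 0 u = RInt fj u v.
Proof.
  intros Hc H0 H1 H2.
  assert (E : forall p q, 0 <= p -> p <= q -> q < 1 -> ex_RInt fj p q).
  { intros p q Hp Hpq Hq. apply (@ex_RInt_continuous R_CompleteNormedModule). intros x Hx.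
    rewrite Rmin_left, Rmax_right in Hx by lra. apply Hc; lra. }
  rewrite <- (RInt_Chasles fj 0 u v) by (apply E; lra).
  unfold plus; simpl. ring.
Qed.

Lemma conv_gen (fj : R -> R) (K a : R) : 0 < a -> 0 <= K ->
  (forall u, u < 1 -> continuous fj u) ->
  (forall u, 0 <= u < 1 -> Rabs (fj u) <= K*exp((a-1)*ln(1-u))) ->
  exists L, forall eps, 0 < eps -> exists d, 0 < d /\ forall c, 0 <= c < 1 -> 1 - c < d ->
    Rabs (RInt fj 0 c - L) < eps.
Proof.
  intros Ha HK Hc Hb.
  assert (Hcau : exists y : R, filterlim (fun c => RInt fj 0 c) (at_left 1) (locally y)).
  { apply (proj1 (@filterlim_locally_cauchy R R_CompleteSpace (at_left 1) _ (fun c => RInt fj 0 c))). intros eps.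
    destruct (smallB K a (eps/2) Ha HK) as [d [Hd Hdd]]. destruct eps; simpl; lra.
    exists (fun c => 0 <= c < 1 /\ 1 - c < d). split.
    - exists (mkposreal d (proj1 Hd)). intros x Hx Hx1.
      unfold ball in Hx; simpl in Hx; unfold AbsRing_ball, abs, minus, plus, opp in Hx; simpl in Hx.
      apply Rabs_def2 in Hx. lra.
    - intros u v [Hu1 Hu2] [Hv1 Hv2].
      unfold ball; simpl; unfold AbsRing_ball, abs, minus, plus, opp; simpl.
      destruct (Rle_dec u v) as [Huv|Huv].
      + replace (RInt fj 0 v + - RInt fj 0 u) with (RInt fj 0 v - RInt fj 0 u) by ring.
        rewrite chasles0 by (auto; lra).
        eapply Rle_lt_trans. apply (tail_bound fj K a); auto; lra.
        assert (H := Hdd u (proj2 Hu1) Hu2). destruct eps; simpl in *; lra.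
      + replace (RInt fj 0 v + - RInt fj 0 u) with (- (RInt fj 0 u - RInt fj 0 v)) by ring.
        rewrite Rabs_Ropp, chasles0 by (auto; lra).
        eapply Rle_lt_trans. apply (tail_bound fj K a); auto; lra.
        assert (H := Hdd v (proj2 Hv1) Hv2). destruct eps; simpl in *; lra. }
  destruct Hcau as [y Hy]. exists y. intros eps He.
  specialize (Hy _ (locally_ball y (mkposreal eps He))).
  destruct Hy as [d0 Hd0]. exists d0. split. apply cond_pos.
  intros c Hc1 Hc2. assert (Hb1 : ball 1 d0 c).
  { unfold ball; simpl; unfold AbsRing_ball, abs, minus, plus, opp; simpl.
    rewrite Rabs_left1; lra. }
  specialize (Hd0 c Hb1 (proj2 Hc1)).
  unfold ball in Hd0; simpl in Hd0; unfold AbsRing_ball, abs, minus, plus, opp in Hd0; simpl in Hd0.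
  exact Hd0.
Qed.

Lemma ln_le' x y : 0 < x -> x <= y -> ln x <= ln y.
Proof. intros Hx Hxy. destruct (Req_dec x y) as [->|Hne]; [lra|].
  left; apply ln_increasing; lra. Qed.

Lemma Cexp_fst_bound w : Rabs (fst (Cexp w)) <= exp (fst w).
Proof. unfold Cexp; simpl. rewrite Rabs_mult, Rabs_pos_eq by (left; apply exp_pos).
  pose proof (COS_bound (snd w)). pose proof (exp_pos (fst w)).
  assert (Rabs (cos (snd w)) <= 1) by (apply Rabs_le; lra). nra. Qed.
Lemma Cexp_snd_bound w : Rabs (snd (Cexp w)) <= exp (fst w).
Proof. unfold Cexp; simpl. rewrite Rabs_mult, Rabs_pos_eq by (left; apply exp_pos).
  pose proof (SIN_bound (snd w)). pose proof (exp_pos (fst w)).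
  assert (Rabs (sin (snd w)) <= 1) by (apply Rabs_le; lra). nra. Qed.

Definition shat (beta delta : R) (s : Cplx) : Cplx := Cscal (/ (delta - beta)) s.
Definition Kb (beta delta : R) (s : Cplx) : R :=
  exp ((- fst (shat beta delta s) - 1) * ln (delta - beta)).

Lemma exp_le' x y : x <= y -> exp x <= exp y.
Proof. intros H. destruct (Req_dec x y) as [->|]; [lra|left; apply exp_increasing; lra]. Qed.

Lemma a_pos beta delta s : beta < delta -> 0 < Cre s -> 0 < fst (shat beta delta s).
Proof. intros. unfold shat, Cscal, Cre in *; simpl. apply Rmult_lt_0_compat; [apply Rinv_0_lt_compat|]; lra. Qed.

Lemma f_core beta delta s u : 0 < beta -> beta < delta -> 0 < Cre s -> 0 <= u < 1 ->
  exp (fst (Cadd (Cscal (ln (1-u)) (Csub (shat beta delta s) (RtoC 1)))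
                 (Cscal (ln (delta - beta*u)) (Csub (Copp (shat beta delta s)) (RtoC 1)))))
  <= Kb beta delta s * exp ((fst (shat beta delta s) - 1) * ln (1 - u)).
Proof.
  intros hb hbd hs hu. pose proof (a_pos beta delta s hbd hs). unfold Kb. set (a := fst (shat beta delta s)) in *.
  unfold Cadd, Cscal, Csub, Copp, RtoC; simpl. fold a.
  rewrite <- exp_plus. apply exp_le'.
  assert (ln (delta - beta) <= ln (delta - beta*u)) by (apply ln_le'; nra).
  assert (0 <= (a+1)*(ln (delta - beta*u) - ln (delta - beta))) by (apply Rmult_le_pos; lra).
  assert (Ha : a = / (delta - beta) * fst s) by reflexivity. rewrite <- Ha. nra.
Qed.

Lemma f_bound1 beta delta N0 s u : 0 < beta -> beta < delta -> 0 < Cre s -> 0 <= u < 1 ->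
  Rabs (fst (rhs_integrand beta delta N0 s u)) <=
  Kb beta delta s * exp ((fst (shat beta delta s) - 1) * ln (1 - u)).
Proof.
  intros hb hbd hs hu. unfold rhs_integrand, Cpow. rewrite Cexp_add. fold (shat beta delta s).
  set (X := Cexp _). unfold Cscal at 1; cbn [fst]. rewrite Rabs_mult.
  assert (Hp : Rabs (u ^ N0) <= 1).
  { rewrite Rabs_pos_eq by (apply pow_le; lra). rewrite <- (pow1 N0). apply pow_incr; lra. }
  apply Rle_trans with (Rabs (fst X)).
  { rewrite <- (Rmult_1_l (Rabs (fst X))) at 2. apply Rmult_le_compat_r; [apply Rabs_pos|exact Hp]. }
  eapply Rle_trans; [apply Cexp_fst_bound | apply f_core; auto].
Qed.

Lemma f_bound2 beta delta N0 s u : 0 < beta -> beta < delta -> 0 < Cre s -> 0 <= u < 1 ->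
  Rabs (snd (rhs_integrand beta delta N0 s u)) <=
  Kb beta delta s * exp ((fst (shat beta delta s) - 1) * ln (1 - u)).
Proof.
  intros hb hbd hs hu. unfold rhs_integrand, Cpow. rewrite Cexp_add. fold (shat beta delta s).
  set (X := Cexp _). unfold Cscal at 1; cbn [snd]. rewrite Rabs_mult.
  assert (Hp : Rabs (u ^ N0) <= 1).
  { rewrite Rabs_pos_eq by (apply pow_le; lra). rewrite <- (pow1 N0). apply pow_incr; lra. }
  apply Rle_trans with (Rabs (snd X)).
  { rewrite <- (Rmult_1_l (Rabs (snd X))) at 2. apply Rmult_le_compat_r; [apply Rabs_pos|exact Hp]. }
  eapply Rle_trans; [apply Cexp_snd_bound | apply f_core; auto].
Qed.

Definition Et (beta delta t : R) := exp ((beta - delta) * t).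
Definition rz (beta delta z t : R) :=
  (delta - beta * z - (1 - z) * delta * exp ((beta - delta) * t)) /
  (delta - beta * z - (1 - z) * beta * exp ((beta - delta) * t)).
Definition dgz (beta delta z t : R) := (1 - rz beta delta z t) * (delta - beta * rz beta delta z t).

Lemma E_le1 beta delta t : beta < delta -> 0 <= t -> 0 < exp ((beta - delta) * t) <= 1.
Proof. intros. split. apply exp_pos. rewrite <- exp_0. apply exp_le'. nra. Qed.

Lemma rz_props beta delta z t : 0 < beta -> beta < delta -> 0 <= z < 1 -> 0 <= t ->
  let E := exp ((beta - delta) * t) in
  let D := delta - beta * z - (1 - z) * beta * E in
  delta - beta <= D /\
  1 - rz beta delta z t = (1 - z) * (delta - beta) * E / D /\
  delta - beta * rz beta delta z t = (delta - beta) * (delta - beta * z) / D /\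
  z <= rz beta delta z t < 1.
Proof.
  intros hb hbd hz ht E D. pose proof (E_le1 beta delta t hbd ht) as HE. fold E in HE.
  assert (0 <= beta*((1-z)*(1-E))) by (apply Rmult_le_pos; [lra|apply Rmult_le_pos; lra]).
  assert (HD : delta - beta <= D) by (unfold D; nra).
  assert (H1 : 1 - rz beta delta z t = (1 - z) * (delta - beta) * E / D).
  { unfold rz; fold E; fold D. unfold D in *. field. lra. }
  assert (H2 : delta - beta * rz beta delta z t = (delta - beta) * (delta - beta * z) / D).
  { unfold rz; fold E; fold D. unfold D in *. field. lra. }
  repeat split; auto.
  - assert (rz beta delta z t - z = (1 - z) * (delta - beta * z) * (1 - E) / D).
    { unfold rz; fold E; fold D. unfold D in *. field. lra. }
    assert (0 <= (1 - z) * (delta - beta * z) * (1 - E) / D).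
    { apply Rdiv_le_0_compat; [|lra]. apply Rmult_le_pos; [|lra]. apply Rmult_le_pos; nra. }
    lra.
  - assert (0 < (1 - z) * (delta - beta) * E / D).
    { apply Rdiv_lt_0_compat; [|lra]. apply Rmult_lt_0_compat; [|lra]. apply Rmult_lt_0_compat; nra. }
    lra.
Qed.

Lemma rz_0 beta delta z : beta < delta -> z < 1 -> rz beta delta z 0 = z.
Proof. intros. unfold rz. rewrite Rmult_0_r, exp_0. field. nra. Qed.

Lemma rz_deriv beta delta z t : 0 < beta -> beta < delta -> 0 <= z < 1 -> 0 <= t ->
  is_derive (rz beta delta z) t (dgz beta delta z t).
Proof.
  intros hb hbd hz ht. destruct (rz_props beta delta z t hb hbd hz ht) as [HD _].
  unfold dgz, rz. auto_derive.
  - lra.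
  - field. lra.
Qed.

Lemma dgz_cont beta delta z t : 0 < beta -> beta < delta -> 0 <= z < 1 -> 0 <= t ->
  continuous (dgz beta delta z) t.
Proof.
  intros hb hbd hz ht. destruct (rz_props beta delta z t hb hbd hz ht) as [HD _].
  apply (@ex_derive_continuous R_AbsRing R_NormedModule).
  unfold dgz, rz. auto_derive. lra.
Qed.

Lemma Cmul_scal2 P c d W : Cmul P (Cscal c (Cscal d W)) = Cscal d (Cscal c (Cmul P W)).
Proof. destruct P, W; unfold Cmul, Cscal; simpl; f_equal; ring. Qed.

Lemma pointwise beta delta N0 s z t : 0 < beta -> beta < delta -> 0 <= z < 1 -> 0 <= t ->
  laplace_integrand beta delta N0 z s t =
  Cmul (rhs_prefactor beta delta z s)
       (Cscal (dgz beta delta z t) (rhs_integrand beta delta N0 s (rz beta delta z t))).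
Proof.
  intros hb hbd hz ht.
  destruct (rz_props beta delta z t hb hbd hz ht) as [HD [H1 [H2 H3]]].
  unfold rhs_integrand at 1. rewrite Cmul_scal2.
  unfold laplace_integrand, gfun. fold (rz beta delta z t). f_equal.
  unfold dgz, rhs_prefactor. fold (shat beta delta s).
  rewrite key_pow.
  2: { apply Rdiv_lt_0_compat; nra. }
  2: lra. 2: nra.
  rewrite H1, H2.
  replace ((delta - beta * z) / (1 - z) * ((1 - z) * (delta - beta) * exp ((beta - delta) * t) /
      (delta - beta * z - (1 - z) * beta * exp ((beta - delta) * t))) /
      ((delta - beta) * (delta - beta * z) / (delta - beta * z - (1 - z) * beta * exp ((beta - delta) * t))))
    with (exp ((beta - delta) * t)).
  2: { field. repeat split; nra. }
  rewrite Cpow_exp. f_equal. unfold shat, Cscal, Copp; simpl. f_equal; field; lra.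
Qed.

Lemma comp_int beta delta z T (fj : R -> R) : 0 < beta -> beta < delta -> 0 <= z < 1 -> 0 <= T ->
  (forall u, u < 1 -> continuous fj u) ->
  is_RInt (fun t => dgz beta delta z t * fj (rz beta delta z t)) 0 T
     (RInt fj z (rz beta delta z T)).
Proof.
  intros hb hbd hz hT Hc.
  assert (H : is_RInt (fun y => scal (dgz beta delta z y) (fj (rz beta delta z y))) 0 T
     (RInt fj (rz beta delta z 0) (rz beta delta z T))).
  { apply (@is_RInt_comp R_CompleteNormedModule fj (rz beta delta z) (dgz beta delta z)).
  - intros x Hx. rewrite Rmin_left, Rmax_right in Hx by lra. apply Hc.
    apply (rz_props beta delta z x hb hbd hz); lra.
  - intros x Hx. rewrite Rmin_left, Rmax_right in Hx by lra. split.
    apply rz_deriv; auto; lra. apply dgz_cont; auto; lra. }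
  rewrite rz_0 in H by lra.
  exact H.
Qed.

Lemma lap_int beta delta N0 s z T : 0 < beta -> beta < delta -> 0 <= z < 1 -> 0 <= T ->
  let P := rhs_prefactor beta delta z s in
  let R1 := RInt (fun u => fst (rhs_integrand beta delta N0 s u)) z (rz beta delta z T) in
  let R2 := RInt (fun u => snd (rhs_integrand beta delta N0 s u)) z (rz beta delta z T) in
  is_RInt (fun t => fst (laplace_integrand beta delta N0 z s t)) 0 T (fst P * R1 - snd P * R2) /\
  is_RInt (fun t => snd (laplace_integrand beta delta N0 z s t)) 0 T (fst P * R2 + snd P * R1).
Proof.
  intros hb hbd hz hT P R1 R2.
  pose proof (comp_int beta delta z T _ hb hbd hz hT (fun u Hu => f1_cont beta delta N0 s u hb hbd Hu)) as I1.
  pose proof (comp_int beta delta z T _ hb hbd hz hT (fun u Hu => f2_cont beta delta N0 s u hb hbd Hu)) as I2.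
  fold R1 in I1. fold R2 in I2.
  split.
  - apply (is_RInt_ext (fun t => fst P * (dgz beta delta z t * fst (rhs_integrand beta delta N0 s (rz beta delta z t)))
        - snd P * (dgz beta delta z t * snd (rhs_integrand beta delta N0 s (rz beta delta z t))))).
    { intros x Hx. rewrite Rmin_left, Rmax_right in Hx by lra.
      rewrite pointwise by (auto; lra). fold P. set (X := rhs_integrand _ _ _ _ _). unfold Cmul, Cscal; cbn [fst snd]. reflexivity. }
    apply (@is_RInt_minus R_NormedModule); apply (@is_RInt_scal R_NormedModule); assumption.
  - apply (is_RInt_ext (fun t => fst P * (dgz beta delta z t * snd (rhs_integrand beta delta N0 s (rz beta delta z t)))
        + snd P * (dgz beta delta z t * fst (rhs_integrand beta delta N0 s (rz beta delta z t))))).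
    { intros x Hx. rewrite Rmin_left, Rmax_right in Hx by lra.
      rewrite pointwise by (auto; lra). fold P. set (X := rhs_integrand _ _ _ _ _). unfold Cmul, Cscal; cbn [fst snd]. reflexivity. }
    apply (@is_RInt_plus R_NormedModule); apply (@is_RInt_scal R_NormedModule); assumption.
Qed.

Definition qd beta delta z := (delta - beta) / ((1 - z) * (delta - beta * z)).

Lemma P_deriv1 beta delta s z : 0 < beta -> beta < delta -> z < 1 ->
  is_derive (fun x => fst (rhs_prefactor beta delta x s)) z
    (fst (Cscal (qd beta delta z) (Cmul (rhs_prefactor beta delta z s) (shat beta delta s)))).
Proof.
  intros hb hbd hz. unfold rhs_prefactor, qd, shat, Cpow, Cexp, Cscal, Cmul; cbn [fst snd].
  auto_derive.
  - repeat split; try (apply Rdiv_lt_0_compat); nra.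
  - replace (1 + - z) with (1 - z) by ring. replace (delta + - (beta * z)) with (delta - beta*z) by ring. change ((delta - beta * z) * / (1 - z)) with ((delta - beta * z) / (1 - z)). field. split; nra.
Qed.

Lemma P_deriv2 beta delta s z : 0 < beta -> beta < delta -> z < 1 ->
  is_derive (fun x => snd (rhs_prefactor beta delta x s)) z
    (snd (Cscal (qd beta delta z) (Cmul (rhs_prefactor beta delta z s) (shat beta delta s)))).
Proof.
  intros hb hbd hz. unfold rhs_prefactor, qd, shat, Cpow, Cexp, Cscal, Cmul; cbn [fst snd].
  auto_derive.
  - repeat split; try (apply Rdiv_lt_0_compat); nra.
  - replace (1 + - z) with (1 - z) by ring. replace (delta + - (beta * z)) with (delta - beta*z) by ring. change ((delta - beta * z) * / (1 - z)) with ((delta - beta * z) / (1 - z)). field. split; nra.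
Qed.

Lemma F_deriv (fj : R -> R) z : z < 1 -> (forall u, u < 1 -> continuous fj u) ->
  is_derive (fun x => RInt fj 0 x) z (fj z).
Proof.
  intros hz Hc. apply (@is_derive_RInt R_NormedModule fj (fun x => RInt fj 0 x) 0 z).
  - assert (Hp : 0 < (1 - z)/2) by lra.
    exists (mkposreal _ Hp). intros y Hy.
    unfold ball in Hy; simpl in Hy; unfold AbsRing_ball, abs, minus, plus, opp in Hy; simpl in Hy.
    apply Rabs_def2 in Hy.
    apply (@RInt_correct R_CompleteNormedModule).
    apply (@ex_RInt_continuous R_CompleteNormedModule). intros x Hx.
    apply Hc. assert (Rmax 0 y < 1) by (apply Rmax_lub_lt; lra). lra.
  - apply Hc; lra.
Qed.

Definition Cderiv (F : R -> Cplx) z l :=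
  is_derive (fun x => fst (F x)) z (fst l) /\ is_derive (fun x => snd (F x)) z (snd l).

Lemma Cderiv_mul A B z dA dB : Cderiv A z dA -> Cderiv B z dB ->
  Cderiv (fun x => Cmul (A x) (B x)) z (Cadd (Cmul dA (B z)) (Cmul (A z) dB)).
Proof.
  intros [HA1 HA2] [HB1 HB2].
  assert (M11 := @is_derive_mult R_AbsRing _ _ z _ _ HA1 HB1 Rmult_comm).
  assert (M22 := @is_derive_mult R_AbsRing _ _ z _ _ HA2 HB2 Rmult_comm).
  assert (M12 := @is_derive_mult R_AbsRing _ _ z _ _ HA1 HB2 Rmult_comm).
  assert (M21 := @is_derive_mult R_AbsRing _ _ z _ _ HA2 HB1 Rmult_comm).
  assert (Eder : forall (f : R -> R) v w, is_derive f z v -> v = w -> is_derive f z w) by (intros; subst; auto).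
  split.
  - assert (H := @is_derive_minus R_AbsRing _ _ _ z _ _ M11 M22).
    unfold Cmul, Cadd; cbn [fst snd].
    refine (Eder _ _ _ H _). unfold minus, plus, mult, opp; simpl. ring.
  - assert (H := @is_derive_plus R_AbsRing _ _ _ z _ _ M12 M21).
    unfold Cmul, Cadd; cbn [fst snd].
    refine (Eder _ _ _ H _). unfold minus, plus, mult, opp; simpl. ring.
Qed.

Lemma deriv_within (F : R -> R) (D : R -> Prop) z l : is_derive F z l ->
  limit1_in (fun h => (F h - F z) / (h - z)) (fun h => D h /\ h <> z) l z.
Proof.
  intros H. apply is_derive_Reals in H.
  intros eps He. destruct (H eps He) as [del Hdel].
  exists del. split. apply cond_pos.
  intros x [[_ Hxz] Hd]. unfold R_dist in *. simpl in *. unfold R_dist in Hd.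
  specialize (Hdel (x - z)). replace (z + (x - z)) with x in Hdel by ring.
  apply Hdel. lra. exact Hd.
Qed.

Lemma final_alg (P I W sh s : Cplx) (m q zN dd : R) :
  m * q = dd -> Cscal dd sh = s -> Cscal m (Cmul P W) = RtoC 1 ->
  Cscal m (Cadd (Cmul (Cscal q (Cmul P sh)) I) (Cmul P (Copp (Cscal zN W))))
  = Csub (Cmul s (Cmul P I)) (RtoC zN).
Proof.
  intros H1 H2 H3. subst s. subst dd.
  destruct P as [p1 p2], I as [i1 i2], W as [w1 w2], sh as [a b].
  unfold Cscal, Cmul, RtoC in H3; cbn [fst snd] in H3. injection H3 as H3a H3b.
  unfold Csub, Cscal, Cadd, Cmul, Copp, RtoC; cbn [fst snd]. f_equal.
  - transitivity (m * q * (a * (p1 * i1 - p2 * i2) - b * (p1 * i2 + p2 * i1)) - zN * (m * (p1 * w1 - p2 * w2))); [ring|].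
    rewrite H3a. ring.
  - transitivity (m * q * (a * (p1 * i2 + p2 * i1) + b * (p1 * i1 - p2 * i2)) - zN * (m * (p1 * w2 + p2 * w1))); [ring|].
    rewrite H3b. ring.
Qed.

Lemma lim_helper (A B L1 L2 : R) (g1 g2 : R -> R) eps : 0 < eps ->
  (forall eps, 0 < eps -> exists d, 0 < d /\ forall c, 0 <= c < 1 -> 1 - c < d -> Rabs (g1 c - L1) < eps) ->
  (forall eps, 0 < eps -> exists d, 0 < d /\ forall c, 0 <= c < 1 -> 1 - c < d -> Rabs (g2 c - L2) < eps) ->
  exists d, 0 < d /\ forall c, 0 <= c < 1 -> 1 - c < d ->
    Rabs (A * (g1 c - L1) + B * (g2 c - L2)) < eps.
Proof.
  intros He H1 H2.
  set (C := Rabs A + Rabs B + 1).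
  assert (HC : 0 < C) by (unfold C; pose proof (Rabs_pos A); pose proof (Rabs_pos B); lra).
  assert (He' : 0 < eps / C) by (apply Rdiv_lt_0_compat; lra).
  destruct (H1 _ He') as [d1 [Hd1 Hd1']]. destruct (H2 _ He') as [d2 [Hd2 Hd2']].
  exists (Rmin d1 d2). split. apply Rmin_glb_lt; lra.
  intros c Hc Hcd.
  assert (X1 := Hd1' c Hc ltac:(eapply Rlt_le_trans; [exact Hcd| apply Rmin_l])).
  assert (X2 := Hd2' c Hc ltac:(eapply Rlt_le_trans; [exact Hcd| apply Rmin_r])).
  eapply Rle_lt_trans. apply Rabs_triang. rewrite !Rabs_mult.
  pose proof (Rabs_pos A). pose proof (Rabs_pos B).
  pose proof (Rabs_pos (g1 c - L1)). pose proof (Rabs_pos (g2 c - L2)).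
  assert (Rabs A * Rabs (g1 c - L1) <= Rabs A * (eps / C)) by (apply Rmult_le_compat_l; lra).
  assert (Rabs B * Rabs (g2 c - L2) <= Rabs B * (eps / C)) by (apply Rmult_le_compat_l; lra).
  assert (eps = C * (eps / C)) by (field; lra).
  unfold C in *. nra.
Qed.

Lemma T_helper beta delta z d : 0 < beta -> beta < delta -> 0 <= z < 1 -> 0 < d ->
  exists M, forall T, 0 <= T -> M <= T -> 1 - rz beta delta z T < d.
Proof.
  intros hb hbd hz hd. exists (ln d / (beta - delta) + 1). intros T HT HM.
  destruct (rz_props beta delta z T hb hbd hz HT) as [HD [H1 _]]. rewrite H1.
  set (E := exp ((beta - delta) * T)) in *.
  assert (HE : 0 < E) by apply exp_pos.
  assert (HEd : E < d).
  { unfold E. rewrite <- (exp_ln d) by lra. apply exp_increasing.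
    assert ((beta - delta) * T <= (beta - delta) * (ln d / (beta - delta) + 1)) by (apply Rmult_le_compat_neg_l; lra).
    replace ((beta - delta) * (ln d / (beta - delta) + 1)) with (ln d + (beta - delta)) in H by (field; lra).
    lra. }
  apply Rle_lt_trans with E; [|exact HEd].
  apply Rmult_le_reg_r with (delta - beta * z - (1 - z) * beta * E); [lra|].
  unfold Rdiv. rewrite Rmult_assoc, Rinv_l, Rmult_1_r by lra.
  assert (0 <= z * (delta - beta) * E) by (apply Rmult_le_pos; [apply Rmult_le_pos|]; lra).
  assert (0 <= E * (delta - beta * z - (1 - z) * beta * E - (delta - beta))) by (apply Rmult_le_pos; lra).
  nra.
Qed.

Theorem mainTheorem6 (beta delta : R) (N0 : nat) (s : Cplx)
  (hbeta : 0 < beta) (hbd : beta < delta) (hs : 0 < Cre s) :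
  exists G : R -> Cplx,
    (forall z, 0 <= z < 1 ->
       Cimproper_int_inf (laplace_integrand beta delta N0 z s) 0 (G z) /\
       exists I : Cplx,
         Cimproper_int_right (rhs_integrand beta delta N0 s) z 1 I /\
         G z = Cmul (rhs_prefactor beta delta z s) I) /\
    (forall z, 0 <= z < 1 ->
       exists dG : Cplx,
         C_deriv_within G (fun h => 0 <= h < 1) z dG /\
         Cscal ((1 - z) * (delta - beta * z)) dG
           = Csub (Cmul s (G z)) (RtoC (z ^ N0))).
Proof.
  set (f1 := fun u => fst (rhs_integrand beta delta N0 s u)).
  set (f2 := fun u => snd (rhs_integrand beta delta N0 s u)).
  assert (Hc1 : forall u, u < 1 -> continuous f1 u) by (intros; apply f1_cont; auto).
  assert (Hc2 : forall u, u < 1 -> continuous f2 u) by (intros; apply f2_cont; auto).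
  assert (Ha := a_pos beta delta s hbd hs).
  assert (HK : 0 <= Kb beta delta s) by (left; apply exp_pos).
  destruct (conv_gen f1 _ _ Ha HK Hc1 (fun u Hu => f_bound1 beta delta N0 s u hbeta hbd hs Hu)) as [L1 HL1].
  destruct (conv_gen f2 _ _ Ha HK Hc2 (fun u Hu => f_bound2 beta delta N0 s u hbeta hbd hs Hu)) as [L2 HL2].
  set (I := fun x => (L1 - RInt f1 0 x, L2 - RInt f2 0 x) : Cplx).
  exists (fun x => Cmul (rhs_prefactor beta delta x s) (I x)). split.
  - intros z Hz. split.
    + set (P := rhs_prefactor beta delta z s).
      assert (Hch : forall T, 0 <= T -> forall fj, (forall u, u < 1 -> continuous fj u) ->
                RInt fj z (rz beta delta z T) = RInt fj 0 (rz beta delta z T) - RInt fj 0 z).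
      { intros T HT fj Hfj. destruct (rz_props beta delta z T hbeta hbd Hz HT) as [_ [_ [_ Hr]]].
        symmetry. apply chasles0; auto; lra. }
      split; split.
      * intros T HT. destruct (lap_int beta delta N0 s z T hbeta hbd Hz HT) as [J _].
        constructor. apply ex_RInt_Reals_0. eexists; exact J.
      * intros eps He.
        destruct (lim_helper (fst P) (- snd P) L1 L2 (fun c => RInt f1 0 c) (fun c => RInt f2 0 c) eps He HL1 HL2)
          as [d [Hd Hdd]].
        destruct (T_helper beta delta z d hbeta hbd Hz Hd) as [M HM].
        exists M. intros T pr HT HMT.
        destruct (lap_int beta delta N0 s z T hbeta hbd Hz HT) as [J _].
        rewrite <- RInt_Reals, (is_RInt_unique _ _ _ _ J).
        fold P f1 f2. rewrite !Hch by auto.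
        destruct (rz_props beta delta z T hbeta hbd Hz HT) as [_ [_ [_ Hr]]].
        specialize (Hdd (rz beta delta z T) ltac:(lra) (HM T HT HMT)).
        unfold I, Cmul; cbn [fst snd].
        replace (fst P * (RInt f1 0 (rz beta delta z T) - RInt f1 0 z) -
                 snd P * (RInt f2 0 (rz beta delta z T) - RInt f2 0 z) -
                 (fst P * (L1 - RInt f1 0 z) - snd P * (L2 - RInt f2 0 z)))
          with (fst P * (RInt f1 0 (rz beta delta z T) - L1) + - snd P * (RInt f2 0 (rz beta delta z T) - L2))
          by ring.
        exact Hdd.
      * intros T HT. destruct (lap_int beta delta N0 s z T hbeta hbd Hz HT) as [_ J].
        constructor. apply ex_RInt_Reals_0. eexists; exact J.
      * intros eps He.
        destruct (lim_helper (snd P) (fst P) L1 L2 (fun c => RInt f1 0 c) (fun c => RInt f2 0 c) eps He HL1 HL2)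
          as [d [Hd Hdd]].
        destruct (T_helper beta delta z d hbeta hbd Hz Hd) as [M HM].
        exists M. intros T pr HT HMT.
        destruct (lap_int beta delta N0 s z T hbeta hbd Hz HT) as [_ J].
        rewrite <- RInt_Reals, (is_RInt_unique _ _ _ _ J).
        fold P f1 f2. rewrite !Hch by auto.
        destruct (rz_props beta delta z T hbeta hbd Hz HT) as [_ [_ [_ Hr]]].
        specialize (Hdd (rz beta delta z T) ltac:(lra) (HM T HT HMT)).
        unfold I, Cmul; cbn [fst snd].
        replace (fst P * (RInt f2 0 (rz beta delta z T) - RInt f2 0 z) +
                 snd P * (RInt f1 0 (rz beta delta z T) - RInt f1 0 z) -
                 (fst P * (L2 - RInt f2 0 z) + snd P * (L1 - RInt f1 0 z)))
          with (snd P * (RInt f1 0 (rz beta delta z T) - L1) + fst P * (RInt f2 0 (rz beta delta z T) - L2))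
          by ring.
        exact Hdd.
    + exists (I z). split; [|reflexivity].
      split; split.
      * intros c Hc. constructor. apply ex_RInt_Reals_0.
        apply (@ex_RInt_continuous R_CompleteNormedModule). intros x Hx.
        rewrite Rmin_left, Rmax_right in Hx by lra. apply Hc1; lra.
      * intros eps He. destruct (HL1 eps He) as [d [Hd Hdd]]. exists d. split; auto.
        intros c pr Hc Hcd. rewrite <- RInt_Reals. fold f1.
        rewrite <- chasles0 by (auto; lra). unfold I; cbn [fst].
        replace (RInt f1 0 c - RInt f1 0 z - (L1 - RInt f1 0 z)) with (RInt f1 0 c - L1) by ring.
        apply Hdd; lra.
      * intros c Hc. constructor. apply ex_RInt_Reals_0.
        apply (@ex_RInt_continuous R_CompleteNormedModule). intros x Hx.
        rewrite Rmin_left, Rmax_right in Hx by lra. apply Hc2; lra.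
      * intros eps He. destruct (HL2 eps He) as [d [Hd Hdd]]. exists d. split; auto.
        intros c pr Hc Hcd. rewrite <- RInt_Reals. fold f2.
        rewrite <- chasles0 by (auto; lra). unfold I; cbn [snd].
        replace (RInt f2 0 c - RInt f2 0 z - (L2 - RInt f2 0 z)) with (RInt f2 0 c - L2) by ring.
        apply Hdd; lra.
  - intros z Hz.
    set (P := rhs_prefactor beta delta z s).
    set (dP := Cscal (qd beta delta z) (Cmul P (shat beta delta s))).
    set (dI := Copp (rhs_integrand beta delta N0 s z)).
    exists (Cadd (Cmul dP (I z)) (Cmul P dI)).
    assert (Eder : forall (f : R -> R) v w, is_derive f z v -> v = w -> is_derive f z w) by (intros; subst; auto).
    assert (HD : Cderiv (fun x => Cmul (rhs_prefactor beta delta x s) (I x)) z (Cadd (Cmul dP (I z)) (Cmul P dI))).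
    { apply Cderiv_mul.
      - split; [apply P_deriv1|apply P_deriv2]; auto; lra.
      - split.
        + refine (Eder _ _ _ (@is_derive_minus R_AbsRing _ (fun _ => L1) (fun x => RInt f1 0 x) z _ _
                     (is_derive_const L1 z) (F_deriv f1 z ltac:(lra) Hc1)) _).
          change (fst dI) with (- f1 z); unfold minus, plus, opp, zero; simpl; ring.
        + refine (Eder _ _ _ (@is_derive_minus R_AbsRing _ (fun _ => L2) (fun x => RInt f2 0 x) z _ _
                     (is_derive_const L2 z) (F_deriv f2 z ltac:(lra) Hc2)) _).
          change (snd dI) with (- f2 z); unfold minus, plus, opp, zero; simpl; ring. }
    split.
    + destruct HD as [HD1 HD2]. split; [exact (deriv_within _ (fun h => 0 <= h < 1) z _ HD1) | exact (deriv_within _ (fun h => 0 <= h < 1) z _ HD2)].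
    + unfold dI, dP, rhs_integrand. fold (shat beta delta s).
      apply final_alg with (dd := delta - beta).
      * unfold qd. field. split; nra.
      * unfold shat, Cscal. destruct s as [s1 s2]; cbn [fst snd]. f_equal; field; lra.
      * unfold P, rhs_prefactor. fold (shat beta delta s).
        rewrite key_pow by (try apply Rdiv_lt_0_compat; nra).
        replace ((delta - beta * z) / (1 - z) * (1 - z) / (delta - beta * z)) with 1 by (field; split; nra).
        apply Cpow_1.
Qed.
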